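(* Let $f$ be a critically coalescing quadratic rational map with critical values $v_1,v_2$, and let $k\ge2$. Then for $x\in\hat{\mathbb{C}}$, $x\in\mathcal{V}_f\cup\{f(v_1)\}$ if and only if $f^{-k}(x)\subseteq\mathcal{C}_{f^k}$.
   Context: A quadratic rational map $f$ with critical values $v_1\neq v_2$ is critically coalescing if $f(v_1)=f(v_2)$. $\mathcal{C}_h$, $\mathcal{V}_h$ denote the sets of critical points and critical values of $h$; $f^{-k}(x)$ is the full preimage of $x$ under the $k$-th iterate. *)

(* Defs.v *)
From HB Require Import structures.
From mathcomp Require Import all_boot all_order all_algebra.
From mathcomp Require Import reals.
From mathcomp Require Import complex.
Set Implicit Arguments. Unset Strict Implicit. Unset Printing Implicit Defensive.
Import Order.TTheory GRing.Theory Num.Theory.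
Local Open Scope ring_scope.

Section RatMap.
Variable R : realType.
Local Notation C := (R[i]).

(* The Riemann sphere: Some z is z in C, None is infinity. *)
Definition sphere := option C.

(* A rational map is a pair (num, den) representing num/den. *)
Definition ratmap := ({poly C} * {poly C})%type.

Definition rdeg (f : ratmap) : nat := (maxn (size f.1) (size f.2)).-1.

Definition is_ratmap_deg (d : nat) (f : ratmap) : bool :=
  coprimep f.1 f.2 && (rdeg f == d).

Definition quadratic_ratmap (f : ratmap) : bool := is_ratmap_deg 2 f.

Definition reval (f : ratmap) (z : sphere) : sphere :=
  let: (p, q) := f in
  match z with
  | Some a => if q.[a] == 0 then None else Some (p.[a] / q.[a])
  | None =>
      if (size q < size p)%N then None
      else if (size p < size q)%N then Some 0
      else Some (lead_coef p / lead_coef q)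
  end.

(* composition f o g of rational maps: homogeneous substitution
   P(r,s) = sum_i p_i r^i s^(d-i), Q(r,s) = sum_i q_i r^i s^(d-i),
   where d = deg f and g = r/s. *)
Definition hsubst (d : nat) (p r s : {poly C}) : {poly C} :=
  \sum_(i < d.+1) p`_i *: (r ^+ i * s ^+ (d - i)).

Definition rcomp (f g : ratmap) : ratmap :=
  (hsubst (rdeg f) f.1 g.1 g.2, hsubst (rdeg f) f.2 g.1 g.2).

Fixpoint riter (k : nat) (f : ratmap) : ratmap :=
  if k is k'.+1 then rcomp f (riter k' f) else ('X, 1).

(* The homogeneous polynomial whose zeros (on the sphere, counted with
   multiplicity, in degree rdeg f) are the points of f^{-1}(c). *)
Definition fiber_poly (f : ratmap) (c : sphere) : {poly C} :=
  match c with Some c => f.1 - c *: f.2 | None => f.2 end.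

(* z is a critical point of f: the local degree of f at z is >= 2, i.e.
   z is a multiple solution of f(w) = f(z).  At a finite point a this is
   ('X - a)^2 | fiber_poly; at infinity the multiplicity of the root
   [1:0] of the homogenized fiber polynomial is rdeg f - deg(fiber_poly). *)
Definition critical (f : ratmap) (z : sphere) : Prop :=
  match z with
  | Some a => (('X - a%:P) ^+ 2 %| fiber_poly f (reval f z))%R
  | None => ((size (fiber_poly f (reval f z))).+1 <= rdeg f)%N
  end.

Definition critical_value (f : ratmap) (v : sphere) : Prop :=
  exists2 c, critical f c & reval f c = v.

Definition critically_coalescing (f : ratmap) (v1 v2 : sphere) : Prop :=
  quadratic_ratmap f /\ v1 <> v2 /\
  (forall v, critical_value f v <-> v = v1 \/ v = v2) /\
  reval f v1 = reval f v2.

End RatMap.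

(* Main.v *)
Require Import Defs.
From HB Require Import structures.
From mathcomp Require Import all_boot all_order all_algebra.
From mathcomp Require Import reals complex.
From mathcomp Require Import zify ring.
Set Implicit Arguments. Unset Strict Implicit. Unset Printing Implicit Defensive.
Import Order.TTheory GRing.Theory Num.Theory.
Local Open Scope ring_scope.

Section Aux.
Variable R : realType.
Local Notation C := (R[i]).
Local Notation sph := (sphere R).

Definition pv (e : nat) (h : {poly C}) (z : sph) : C :=
  match z with Some a => h.[a] | None => h`_e end.
Definition vanish (e : nat) (h : {poly C}) (z : sph) : bool :=
  match z with Some a => root h a | None => (size h <= e)%N end.
Definition hev (D : nat) (h : {poly C}) (x y : C) : C :=
  \sum_(i < D.+1) h`_i * x ^+ i * y ^+ (D - i).
Definition ptx (w : sph) : C := match w with Some b => b | None => 1 end.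
Definition pty (w : sph) : C := match w with Some _ => 1 | None => 0 end.

Lemma coef_top (h : {poly C}) e : (size h <= e.+1)%N -> (size h <= e)%N = (h`_e == 0).
Proof.
move=> hs; case: (leqP (size h) e) => H.
  by rewrite nth_default // eqxx.
have -> : e = (size h).-1 by lia.
rewrite -lead_coefE lead_coef_eq0; apply/esym/negbTE.
by rewrite -size_poly_eq0; lia.
Qed.

Lemma pv_vanish e (h : {poly C}) (z : sph) : (size h <= e.+1)%N -> vanish e h z = (pv e h z == 0).
Proof. by case: z => [a|] //= hs; apply: coef_top. Qed.

Lemma hev_pt D (h : {poly C}) (w : sph) : (size h <= D.+1)%N ->
  (hev D h (ptx w) (pty w) == 0) = vanish D h w.
Proof.
move=> hs; case: w => [b|] /=.
  rewrite /root (horner_coef_wide b hs) /hev.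
  by congr (_ == 0); apply: eq_bigr => i _; rewrite expr1n mulr1.
rewrite /hev big_ord_recr /= subnn expr0 mulr1 expr1n mulr1 big1 ?add0r.
  by rewrite coef_top.
move=> i _; rewrite expr0n.
have -> : (D - i == 0)%N = false by apply/negbTE; have := ltn_ord i; lia.
by rewrite mulr0.
Qed.

Lemma hev_scale D (h : {poly C}) (l x y : C) : hev D h (l * x) (l * y) = l ^+ D * hev D h x y.
Proof.
rewrite /hev mulr_sumr; apply: eq_bigr => i _.
have hi : (i <= D)%N by have := ltn_ord i; lia.
rewrite !exprMn.
have -> : l ^+ D = l ^+ i * l ^+ (D - i) by rewrite -exprD subnKC.
ring.
Qed.

Lemma coef_top_mul (p q : {poly C}) m n : (size p <= m.+1)%N -> (size q <= n.+1)%N ->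
  (p * q)`_(m + n) = p`_m * q`_n.
Proof.
move=> hp hq; rewrite coefM.
have hm : (m < (m + n).+1)%N by lia.
rewrite (bigD1 (Ordinal hm)) //= big1 ?addr0; first by congr (_ * _); congr (_`_ _); lia.
move=> j hj; have hj' : (nat_of_ord j != m) by apply: contra hj => /eqP h; apply/eqP/val_inj.
case: (ltnP m j) => H.
  by rewrite (nth_default 0 (leq_trans hp H)) mul0r.
rewrite [q`_ _]nth_default ?mulr0 //.
apply: (leq_trans hq); have := ltn_ord j; lia.
Qed.

Lemma size_exp_le (r : {poly C}) e i : (size r <= e.+1)%N -> (size (r ^+ i) <= (e * i).+1)%N.
Proof.
move=> hr; apply: (leq_trans (size_poly_exp_leq _ _)).
rewrite ltnS leq_mul2r; apply/orP; right; lia.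
Qed.

Lemma coef_top_exp (r : {poly C}) e i : (size r <= e.+1)%N -> (r ^+ i)`_(e * i) = r`_e ^+ i.
Proof.
move=> hr; elim: i => [|i IH]; first by rewrite !expr0 muln0 coefC.
rewrite !exprS mulnS coef_top_mul //; first by rewrite IH.
exact: size_exp_le.
Qed.

Lemma size_mul_le (p q : {poly C}) m n : (size p <= m.+1)%N -> (size q <= n.+1)%N ->
  (size (p * q)%R <= (m + n).+1)%N.
Proof. move=> hp hq; apply: (leq_trans (size_polyMleq _ _)); lia. Qed.

Lemma size_hsubst D (h r s : {poly C}) e : (size r <= e.+1)%N -> (size s <= e.+1)%N ->
  (size (hsubst D h r s) <= (D * e).+1)%N.
Proof.
move=> hr hs; rewrite /hsubst.
apply: (big_ind (fun p : {poly C} => (size p <= (D * e).+1)%N)).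
- by rewrite size_poly0.
- by move=> p q hp hq; apply: (leq_trans (size_polyD _ _)); rewrite geq_max hp hq.
move=> i _; apply: (leq_trans (size_scale_leq _ _)).
have hi : (i <= D)%N by have := ltn_ord i; lia.
have -> : (D * e = e * i + e * (D - i))%N by rewrite -mulnDr subnKC // mulnC.
by apply: size_mul_le; apply: size_exp_le.
Qed.

Lemma pv_hsubst D (h r s : {poly C}) e z : (size r <= e.+1)%N -> (size s <= e.+1)%N ->
  pv (D * e) (hsubst D h r s) z = hev D h (pv e r z) (pv e s z).
Proof.
move=> hr hs; case: z => [a|] /=.
  rewrite /hsubst /hev horner_sum; apply: eq_bigr => i _.
  by rewrite hornerZ hornerM !horner_exp mulrA.
rewrite /hsubst /hev coef_sum; apply: eq_bigr => i _.
have hi : (i <= D)%N by have := ltn_ord i; lia.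
have -> : (D * e = e * i + e * (D - i))%N by rewrite -mulnDr subnKC // mulnC.
rewrite coefZ coef_top_mul; try by apply: size_exp_le.
by rewrite !coef_top_exp // mulrA.
Qed.


Definition good (g : ratmap R) (e : nat) : Prop :=
  [/\ (1 <= e)%N, rdeg g = e, (size g.1 <= e.+1)%N, (size g.2 <= e.+1)%N &
      forall z, pv e g.1 z != 0 \/ pv e g.2 z != 0].

Definition fv (c : sph) (x y : C) : C :=
  match c with Some c0 => x - c0 * y | None => y end.

Lemma good_max (g : ratmap R) e : good g e -> maxn (size g.1) (size g.2) = e.+1.
Proof. by case=> he hr _ _ _; move: hr; rewrite /rdeg; lia. Qed.

Lemma reval_pv (g : ratmap R) e (z : sph) : good g e ->
  reval g z = if pv e g.2 z == 0 then None else Some (pv e g.1 z / pv e g.2 z).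
Proof.
move=> hg; have hm := good_max hg; case: hg => he _ hp hq _.
case: g hm hp hq => p q /= hm hp hq; case: z => [a|] //=; rewrite /= in hm hp hq.
have {}hm : size p = e.+1 \/ size q = e.+1.
  by move: hm; case: (leqP (size p) (size q)) => H; rewrite ?(maxn_idPr H) ?(maxn_idPl (ltnW H)); auto.
case: (ltnP (size q) (size p)) => h1.
  have hqe : (size q <= e)%N by move: (size p) (size q) hp hq hm h1 => a b; lia.
  by rewrite (nth_default 0 hqe) eqxx.
case: (ltnP (size p) (size q)) => h2.
  have hpe : (size p <= e)%N by move: (size p) (size q) hp hq hm h1 h2 => a b; lia.
  have hqe : size q = e.+1 by move: (size p) (size q) hp hq hm h1 h2 => a b; lia.
  rewrite (nth_default 0 hpe) mul0r.
  have -> : q`_e = lead_coef q by rewrite lead_coefE hqe.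
  by rewrite lead_coef_eq0 -size_poly_eq0 hqe.
have hpe : size p = e.+1 by move: (size p) (size q) hp hq hm h1 h2 => a b; lia.
have hqe : size q = e.+1 by move: (size p) (size q) hp hq hm h1 h2 => a b; lia.
have -> : q`_e = lead_coef q by rewrite lead_coefE hqe.
have -> : p`_e = lead_coef p by rewrite lead_coefE hpe.
by rewrite lead_coef_eq0 -size_poly_eq0 hqe.
Qed.

Lemma fib_pv (g : ratmap R) e (c z : sph) : pv e (fiber_poly g c) z = fv c (pv e g.1 z) (pv e g.2 z).
Proof.
case: c => [c|]; case: z => [a|] //=.
  by rewrite hornerD hornerN hornerZ.
by rewrite coefB coefZ.
Qed.

Lemma size_fib (g : ratmap R) e (c : sph) : (size g.1 <= e.+1)%N -> (size g.2 <= e.+1)%N ->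
  (size (fiber_poly g c) <= e.+1)%N.
Proof.
move=> h1 h2; case: c => [c|] //=.
apply: (leq_trans (size_polyD _ _)); rewrite geq_max h1 size_polyN.
exact: leq_trans (size_scale_leq _ _) h2.
Qed.

Lemma reval_vanish (g : ratmap R) e (z c : sph) : good g e ->
  (reval g z == c) = vanish e (fiber_poly g c) z.
Proof.
move=> hg; have hg' := hg; case: hg' => _ _ h1 h2 hnz.
rewrite pv_vanish ?size_fib // fib_pv (reval_pv z hg).
have := hnz z.
move: (pv e g.1 z) (pv e g.2 z) => x y.
case: (eqVneq y 0) => [->|hy]; case: c => [c|] /=.
- by rewrite mulr0 subr0 => -[hx|//]; rewrite (negbTE hx).
- by move=> _; rewrite [0 == 0]eqxx.
- move=> _; rewrite subr_eq0; apply/eqP/eqP => [[<-]|->].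
    by rewrite divfK.
  by rewrite mulfK.
- by rewrite (negbTE hy).
Qed.

Lemma reval_scale (g : ratmap R) e (z : sph) : good g e ->
  exists2 l, l != 0 & pv e g.1 z = l * ptx (reval g z) /\ pv e g.2 z = l * pty (reval g z).
Proof.
move=> hg; rewrite (reval_pv z hg); case: hg => _ _ _ _ /(_ z) hnz.
case: (pv e g.2 z =P 0) => hy /=.
  exists (pv e g.1 z); last by rewrite hy mulr1 mulr0.
  by case: hnz => //; rewrite hy eqxx.
exists (pv e g.2 z); first by apply/eqP.
by rewrite mulr1 mulrC divfK //; apply/eqP.
Qed.


Definition lin (b : sph) : {poly C} := match b with Some b => 'X - b%:P | None => 1 end.
Definition fibr (b : sph) (r s : {poly C}) : {poly C} :=
  match b with Some b => r - b *: s | None => s end.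
Definition dbl (e : nat) (h : {poly C}) (z : sph) : bool :=
  match z with Some a => (('X - a%:P) ^+ 2 %| h)%R | None => ((size h).+1 <= e)%N end.

Lemma critical_dbl (g : ratmap R) (z : sph) :
  critical g z <-> dbl (rdeg g) (fiber_poly g (reval g z)) z.
Proof. by case: z. Qed.

Lemma hsubst_lin d (a : C) (p q r s : {poly C}) :
  hsubst d (a *: p + q) r s = a *: hsubst d p r s + hsubst d q r s.
Proof.
rewrite /hsubst scaler_sumr -big_split /=; apply: eq_bigr => i _.
by rewrite coefD coefZ scalerDl scalerA.
Qed.

Lemma hsubst0 d (r s : {poly C}) : hsubst d 0 r s = 0.
Proof. by rewrite /hsubst big1 // => i _; rewrite coef0 scale0r. Qed.

Lemma hsubstZ d (a : C) (p r s : {poly C}) : hsubst d (a *: p) r s = a *: hsubst d p r s.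
Proof. by rewrite -[a *: p]addr0 hsubst_lin hsubst0 addr0. Qed.

Lemma hsubst_low n (h r s : {poly C}) : (size h <= n.+1)%N ->
  hsubst n.+1 h r s = s * hsubst n h r s.
Proof.
move=> hs; rewrite /hsubst big_ord_recr /= nth_default // scale0r addr0.
rewrite mulr_sumr; apply: eq_bigr => i _.
have hi : (i <= n)%N by have := ltn_ord i; lia.
by rewrite subSn // exprS -scalerAr; congr (_ *: _); ring.
Qed.

Lemma hsubst_X n (h r s : {poly C}) :
  hsubst n.+1 (h * 'X) r s = r * hsubst n h r s.
Proof.
rewrite /hsubst big_ord_recl /= coefMX /= scale0r add0r.
rewrite mulr_sumr; apply: eq_bigr => i _.
rewrite coefMX /= subSS exprS -scalerAr; congr (_ *: _); ring.
Qed.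

Lemma hsubst_lin_mul n (b : sph) (h1 r s : {poly C}) : (size h1 <= n.+1)%N ->
  hsubst n.+1 (lin b * h1) r s = fibr b r s * hsubst n h1 r s.
Proof.
move=> hs; case: b => [b|] /=; last by rewrite mul1r hsubst_low.
have -> : ('X - b%:P) * h1 = 1 *: (h1 * 'X) + (- b) *: h1.
  by rewrite scale1r mulrBl mulrC scaleNr -mul_polyC.
rewrite hsubst_lin hsubstZ hsubst_X hsubst_low // scale1r mulrBl scaleNr -scalerAl.
by [].
Qed.

Lemma dbl_lin n (b : sph) (h1 : {poly C}) : (size h1 <= n.+1)%N ->
  dbl n.+1 (lin b * h1) b = vanish n h1 b.
Proof.
move=> hs; case: b => [b|] /=; last by rewrite mul1r.
by rewrite expr2 dvdp_mul2l ?polyXsubC_eq0 // dvdp_XsubCl.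
Qed.

Lemma vanish_lin n (b w : sph) (h1 : {poly C}) : w <> b -> (size h1 <= n.+1)%N ->
  vanish n.+1 (lin b * h1) w = vanish n h1 w.
Proof.
move=> hwb hs; case: b hwb => [b|] /=; last by rewrite mul1r; case: w.
case: w => [a|] hab /=.
  rewrite rootM root_XsubC.
  have -> : (a == b) = false by apply/negbTE; apply: contra_not_neq hab => ->.
  by [].
case: (eqVneq h1 0) => [->|h1n]; first by rewrite mulr0 size_poly0.
by rewrite size_mul ?polyXsubC_eq0 // size_XsubC.
Qed.

Lemma factor n (h : {poly C}) (b : sph) : (size h <= n.+2)%N -> vanish n.+1 h b ->
  exists2 h1 : {poly C}, (size h1 <= n.+1)%N & h = lin b * h1.
Proof.
move=> hs; case: b => [b|] /= hv; last by exists h; rewrite ?mul1r.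
case/factor_theorem: hv => q hq; exists q; last by rewrite mulrC.
case: (eqVneq q 0) => [->|qn]; first by rewrite size_poly0.
move: hs; rewrite hq size_mul ?polyXsubC_eq0 // size_XsubC; move: (size q) => m; lia.
Qed.

Lemma dbl_mul e D2 (A B : {poly C}) (z : sph) : (1 <= e)%N ->
  (size A <= e.+1)%N -> (size B <= D2.+1)%N -> vanish e A z ->
  dbl (e + D2) (A * B) z = dbl e A z || vanish D2 B z.
Proof.
move=> he hA hB; case: z => [a|] /= hv.
  case/factor_theorem: hv => A1 ->.
  rewrite expr2 (mulrC A1) -mulrA !dvdp_mul2l ?polyXsubC_eq0 // !dvdp_XsubCl.
  by rewrite -rootM.
case: (eqVneq A 0) => [->|An].
  by rewrite mul0r size_poly0 he (leq_trans he (leq_addr _ _)).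
case: (eqVneq B 0) => [->|Bn].
  by rewrite mulr0 size_poly0 /= orbT (leq_trans he (leq_addr _ _)).
rewrite size_mul //.
have : (0 < size A)%N by rewrite size_poly_gt0.
have : (0 < size B)%N by rewrite size_poly_gt0.
move: (size A) (size B) hA hB hv => x y hA hB hv h1 h2.
apply/idP/orP; [|case]; lia.
Qed.


Lemma fib_rcomp (f g : ratmap R) (c : sph) :
  fiber_poly (rcomp f g) c = hsubst (rdeg f) (fiber_poly f c) g.1 g.2.
Proof.
case: c => [c|] //=.
have -> : f.1 - c *: f.2 = 1 *: f.1 + (-c) *: f.2 by rewrite scale1r scaleNr.
by rewrite hsubst_lin hsubstZ scale1r scaleNr.
Qed.

Lemma fibr_fib (g : ratmap R) (b : sph) : fibr b g.1 g.2 = fiber_poly g b.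
Proof. by case: b. Qed.

Lemma pv_comp (g : ratmap R) e (z : sph) : good g e ->
  exists2 l : C, l != 0 & forall D (h : {poly C}),
    pv (D * e) (hsubst D h g.1 g.2) z = l ^+ D * hev D h (ptx (reval g z)) (pty (reval g z)).
Proof.
move=> hg; have [l ln [h1 h2]] := reval_scale z hg.
exists l => // D h; case: hg => _ _ s1 s2 _.
by rewrite pv_hsubst // h1 h2 hev_scale.
Qed.

Lemma rcomp_good (f g : ratmap R) d e : good f d -> good g e ->
  [/\ good (rcomp f g) (d * e),
      forall z, reval (rcomp f g) z = reval f (reval g z) &
      forall z, critical (rcomp f g) z <-> critical g z \/ critical f (reval g z)].
Proof.
move=> hf hg; have hf' := hf; have hg' := hg.
case: hf' => hd rf sf1 sf2 nf; case: hg' => he rg sg1 sg2 ng.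
have s1 : (size (rcomp f g).1 <= (d * e).+1)%N by rewrite /= rf size_hsubst.
have s2 : (size (rcomp f g).2 <= (d * e).+1)%N by rewrite /= rf size_hsubst.
have nF : forall z, pv (d * e) (rcomp f g).1 z != 0 \/ pv (d * e) (rcomp f g).2 z != 0.
  move=> z; have [l ln hl] := pv_comp z hg; rewrite /= rf !hl.
  have := nf (reval g z); rewrite -!(pv_vanish _ sf1) -!(pv_vanish _ sf2).
  rewrite -!(hev_pt _ sf1) -!(hev_pt _ sf2) !mulf_eq0 !negb_or expf_eq0 (negbTE ln) andbF.
  by [].
have rF : rdeg (rcomp f g) = (d * e)%N.
  rewrite /rdeg; have := nF None; rewrite /= -!coef_top //.
  move: s1 s2; move: (size (rcomp f g).1) (size (rcomp f g).2) => x y.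
  have : (1 <= d * e)%N by rewrite muln_gt0 hd he.
  move: (d * e)%N => m hm hx hy HH.
  have hmx : maxn x y = x \/ maxn x y = y.
    by case: (leqP x y) => Hxy; [right | left].
  have := leq_maxl x y; have := leq_maxr x y.
  move: (maxn x y) hmx => M hM h1 h2.
  by case: HH => /negP H; lia.
have gF : good (rcomp f g) (d * e).
  by split => //; rewrite muln_gt0 hd he.
have eF : forall z, reval (rcomp f g) z = reval f (reval g z).
  move=> z; apply/eqP; rewrite (reval_vanish _ _ gF) fib_rcomp rf.
  rewrite pv_vanish ?size_hsubst ?size_fib //.
  have [l ln hl] := pv_comp z hg; rewrite hl mulf_eq0 expf_eq0 (negbTE ln) andbF /=.
  by rewrite hev_pt ?size_fib // -(reval_vanish _ _ hf).
split => // z.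
rewrite !critical_dbl rF eF fib_rcomp rf.
set w := reval g z; set c := reval f w.
have hv : vanish d (fiber_poly f c) w by rewrite -(reval_vanish _ _ hf).
have [n dn] : exists n, d = n.+1 by exists d.-1; lia.
rewrite dn in hf hv sf1 sf2 *.
have [h1 sh1 eh] := factor (size_fib c sf1 sf2) hv.
rewrite eh hsubst_lin_mul // fibr_fib mulSn dbl_mul ?size_fib ?size_hsubst //;
  last by rewrite -(reval_vanish _ _ hg).
rewrite rg dbl_lin //.
rewrite pv_vanish ?size_hsubst //.
have [l ln hl] := pv_comp z hg; rewrite hl mulf_eq0 expf_eq0 (negbTE ln) andbF /=.
rewrite hev_pt //.
by split => /orP.
Qed.


Lemma riter_good (f : ratmap R) d : good f d -> forall k,
  [/\ good (riter k f) (d ^ k),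
      forall z, reval (riter k f) z = iter k (reval f) z &
      forall z, critical (riter k f) z <-> exists2 j, (j < k)%N & critical f (iter j (reval f) z)].
Proof.
move=> hf; elim=> [|k [gk ek ck]].
  have g0 : good (riter 0 f) (d ^ 0).
    rewrite expn0; split => //=.
    - by rewrite /rdeg /= size_polyX size_poly1.
    - by rewrite size_polyX.
    - by rewrite size_poly1.
    case=> [a|] /=; first by right; rewrite hornerC oner_eq0.
    by left; rewrite coefX /= oner_eq0.
  have e0 : forall z, reval (riter 0 f) z = z.
    case=> [a|] /=; first by rewrite hornerC oner_eq0 hornerX divr1.
    by rewrite size_polyX size_poly1.
  split => // z; split => [|[j]] //.
  rewrite critical_dbl e0; case: z => [a|] /=.
    have H := @dbl_lin 0 (Some a) 1 (eq_leq (size_poly1 _)); rewrite /= mulr1 (negbTE (root1 _)) in H.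
    by rewrite alg_polyC H.
  by rewrite /rdeg /= size_polyX size_poly1.
have [gS eS cS] := rcomp_good hf gk.
split.
- by rewrite expnS.
- by move=> z; rewrite (_ : riter k.+1 f = rcomp f (riter k f)) // eS ek.
move=> z; rewrite (_ : riter k.+1 f = rcomp f (riter k f)) // cS ek ck; split.
  case=> [[j hj hc]|hc]; first by exists j => //; lia.
  by exists k.
case=> j hj hc; case: (ltngtP j k) => H.
- by left; exists j.
- by lia.
- by right; rewrite -H.
Qed.


Lemma deg0 (h : {poly C}) (w : sph) : (size h <= 1)%N -> h != 0 -> ~~ vanish 0 h w.
Proof.
move=> hs hn; case: w => [a|] /=.
  by rewrite (size1_polyC hs) rootC; rewrite (size1_polyC hs) polyC_eq0 in hn.
by rewrite size_poly_leq0.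
Qed.

Lemma zero_exists D (h : {poly C}) : (size h <= D.+2)%N -> exists w, vanish D.+1 h w.
Proof.
move=> hs; case: (leqP (size h) D.+1) => H; first by exists None.
have : size h != 1%N by move: (size h) H => m; lia.
by case/closed_rootP => a ha; exists (Some a).
Qed.

Lemma lin_nz (b : sph) (h1 : {poly C}) : lin b * h1 != 0 -> h1 != 0.
Proof. by apply: contraNneq => ->; rewrite mulr0. Qed.

Lemma two_zero (h : {poly C}) (z1 z2 : sph) : h != 0 -> (size h <= 3)%N ->
  vanish 2 h z1 -> vanish 2 h z2 -> z1 <> z2 -> ~~ dbl 2 h z1.
Proof.
move=> hn hs v1 v2 d12.
have [h1 s1 e1] := @factor 1 h z1 hs v1; subst h.
rewrite dbl_lin //; apply/negP => v11.
rewrite vanish_lin // in v2; last by move=> H; apply: d12.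
have [h2 s2 e2] := @factor 0 h1 z1 s1 v11; subst h1.
rewrite vanish_lin // in v2; last by move=> H; apply: d12.
by move: v2; apply/negP/deg0 => //; apply: lin_nz (lin_nz hn).
Qed.

Lemma three_zero (h : {poly C}) (z1 z2 z3 : sph) : h != 0 -> (size h <= 3)%N ->
  vanish 2 h z1 -> vanish 2 h z2 -> vanish 2 h z3 -> z1 <> z2 -> z1 <> z3 -> z2 <> z3 -> False.
Proof.
move=> hn hs v1 v2 v3 d12 d13 d23.
have [h1 s1 e1] := @factor 1 h z1 hs v1; subst h.
rewrite vanish_lin // in v2; last by move=> H; apply: d12.
rewrite vanish_lin // in v3; last by move=> H; apply: d13.
have [h2 s2 e2] := @factor 0 h1 z2 s1 v2; subst h1.
rewrite vanish_lin // in v3; last by move=> H; apply: d23.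
by move: v3; apply/negP/deg0 => //; apply: lin_nz (lin_nz hn).
Qed.

Lemma nodbl_two (h : {poly C}) : h != 0 -> (size h <= 3)%N ->
  (forall z, vanish 2 h z -> ~~ dbl 2 h z) ->
  exists z1, exists2 z2, z1 <> z2 & vanish 2 h z1 /\ vanish 2 h z2.
Proof.
move=> hn hs hnd.
have [z1 v1] := @zero_exists 1 h hs.
have [h1 s1 e1] := @factor 1 h z1 hs v1.
have [z2 v2] := @zero_exists 0 h1 s1.
have d12 : z2 <> z1.
  move=> E; subst z2; have := hnd z1 v1; rewrite e1 dbl_lin // v2; done.
exists z1; exists z2 => //; first by move=> E; apply: d12.
by split => //; rewrite e1 vanish_lin.
Qed.


Section Main.
Variables (f : ratmap R) (v1 v2 : sph).
Hypothesis hf : critically_coalescing f v1 v2.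

Lemma gf : good f 2.
Proof.
case: hf => /andP [cop /eqP rd] _.
have hm : maxn (size f.1) (size f.2) = 3%N by move: rd; rewrite /rdeg; case: (maxn _ _) => [|[|[|[]]]].
have s1 : (size f.1 <= 3)%N by rewrite -hm leq_maxl.
have s2 : (size f.2 <= 3)%N by rewrite -hm leq_maxr.
split => // -[a|] /=.
  case: (eqVneq f.1.[a] 0) => H; [right | by left].
  by apply: (coprimep_root cop); rewrite /root H.
rewrite -!coef_top //.
have : size f.1 = 3%N \/ size f.2 = 3%N.
  by move: hm; case: (leqP (size f.1) (size f.2)) => H; [right|left].
by case=> ->; [left|right].
Qed.

Lemma fnz (c : sph) : fiber_poly f c != 0.
Proof.
apply/negP => /eqP H.
have all_c : forall w, reval f w = c.
  move=> w; apply/eqP; rewrite (reval_vanish _ _ gf) H.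
  by case: w => [a|] /=; rewrite ?root0 ?size_poly0.
case: hf => _ [d12 [cv _]].
have [c1 _ e1] : critical_value f v1 by apply/cv; left.
have [c2 _ e2] : critical_value f v2 by apply/cv; right.
by apply: d12; rewrite -e1 -e2 !all_c.
Qed.

Lemma sfib (c : sph) : (size (fiber_poly f c) <= 3)%N.
Proof. by case: gf => _ _ s1 s2 _; apply: size_fib. Qed.

Lemma crit_f (w : sph) : critical f w <-> dbl 2 (fiber_poly f (reval f w)) w.
Proof. by rewrite critical_dbl; case: gf => _ -> _ _ _. Qed.

Lemma pre_f (w c : sph) : (reval f w = c) <-> vanish 2 (fiber_poly f c) w.
Proof. by rewrite -(reval_vanish _ _ gf); split => [->|/eqP]. Qed.

Lemma F2 (w1 w2 : sph) : reval f w1 = reval f w2 -> w1 <> w2 -> ~ critical f w1.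
Proof.
move=> e12 d12; rewrite crit_f; apply/negP.
apply: (@two_zero _ w1 w2 (fnz _) (sfib _)) => //; apply/pre_f => //.
Qed.

Lemma F6 (w1 w2 w3 : sph) : reval f w1 = reval f w2 -> reval f w1 = reval f w3 ->
  w1 <> w2 -> w1 <> w3 -> w2 <> w3 -> False.
Proof.
move=> e12 e13 d12 d13 d23.
apply: (@three_zero _ w1 w2 w3 (fnz (reval f w1)) (sfib _)) => //; apply/pre_f => //.
Qed.

Lemma F3 (c : sph) : ~ critical_value f c ->
  exists w1, exists2 w2, w1 <> w2 & reval f w1 = c /\ reval f w2 = c.
Proof.
move=> ncv.
have [|w1 [w2 d [h1 h2]]] := @nodbl_two (fiber_poly f c) (fnz c) (sfib c).
  move=> z /pre_f ez; apply/negP => hd; apply: ncv; exists z => //.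
  by apply/crit_f; rewrite ez.
by exists w1; exists w2 => //; split; apply/pre_f.
Qed.

Lemma cv_iff (x : sph) : critical_value f x <-> x = v1 \/ x = v2.
Proof. by case: hf => _ [_ [cv _]]. Qed.

Lemma chain n (x : sph) : ~ critical_value f x -> x <> reval f v1 ->
  exists2 y, iter n (reval f) y = x &
    forall j, (j < n)%N -> ~ critical f (iter j (reval f) y).
Proof.
elim: n x => [|n IH] x ncv nx; first by exists x.
have [w1 [w2 d12 [e1 e2]]] := F3 ncv.
have ncvw : forall w, reval f w = x -> ~ critical_value f w.
  move=> w ew /cv_iff [] E; apply: nx; rewrite -ew E //.
  by case: hf => _ [_ [_ ->]].
have nc1 : ~ critical f w1.
  by apply: (@F2 w1 w2) => //; rewrite e1 e2.
have nc2 : ~ critical f w2.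
  by apply: (@F2 w2 w1) => //; [rewrite e1 e2 | move=> E; apply: d12].
have [w [ew ncw nxw]] : exists w, [/\ reval f w = x, ~ critical f w & w <> reval f v1].
  case: (eqVneq w1 (reval f v1)) => E.
    exists w2; split => // E2; apply: d12; by rewrite E E2.
  by exists w1; split => //; apply/eqP.
have [y ey hy] := IH w (ncvw w ew) nxw.
exists y; first by rewrite iterS ey.
move=> j hj; case: (ltngtP j n) => H.
- exact: hy.
- by lia.
- by rewrite H ey.
Qed.

End Main.

End Aux.

Theorem mainTheorem9 (R : realType) (f : ratmap R) (v1 v2 : sphere R)
  (hf : critically_coalescing f v1 v2) (k : nat) (hk : (2 <= k)%N)
  (x : sphere R) :
  (critical_value f x \/ x = reval f v1) <->
  (forall y : sphere R, iter k (reval f) y = x -> critical (riter k f) y).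
Proof.
have [_ _ cr] := riter_good (gf hf) k.
split.
- move=> H y ey; apply/cr.
  have [m km] : exists m, k = m.+2 by exists k.-2; lia.
  subst k; rewrite !iterS in ey.
  set u := iter m (reval f) y in ey.
  case: H => [hcv|E].
    have [c cc ec] := hcv.
    exists m.+1 => //; rewrite iterS -/u.
    case: (eqVneq (reval f u) c) => [->//|ne].
    exfalso; apply: (F2 hf (w1 := c) (w2 := reval f u) _ _ cc); first by rewrite ec ey.
    by move=> E; rewrite E eqxx in ne.
  have [_ [d12 [_ e12]]] := hf.
  have hw : reval f u = v1 \/ reval f u = v2.
    case: (eqVneq (reval f u) v1) => [->|n1]; first by left.
    case: (eqVneq (reval f u) v2) => [->|n2]; first by right.
    exfalso; apply: (F6 hf (w1 := reval f u) (w2 := v1) (w3 := v2)) => //.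
    + by rewrite ey E.
    + by rewrite ey E.
    + by apply/eqP.
    + by apply/eqP.
  have [c cc ec] : critical_value f (reval f u) by apply/(cv_iff hf).
  exists m => //.
  rewrite -/u; case: (eqVneq u c) => [->//|ne].
  exfalso; apply: (F2 hf (w1 := c) (w2 := u) _ _ cc); first by rewrite ec.
  by move=> E'; rewrite E' eqxx in ne.
- move=> H.
  case: (boolP ((x == v1) || (x == v2))) => [/orP hx|hx].
    by left; apply/(cv_iff hf); case: hx => /eqP; auto.
  case: (eqVneq x (reval f v1)) => [E|nx]; first by right.
  have ncv : ~ critical_value f x.
    by move/(cv_iff hf) => [] E; move: hx; rewrite E eqxx ?orbT.
  have nx' : x <> reval f v1 by move=> E; rewrite E eqxx in nx.
  have [y ey hy] := chain hf k ncv nx'.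
  have [j hj hc] := (cr y).1 (H y ey).
  by exfalso; apply: (hy j).
Qed.
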